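(* Consider the one-stage ANC game described in the context with scalar control ($m=1$). Suppose that for every $x\in\mathbb{R}^n$ and $a\in\mathcal{A}$ the functions $u\mapsto\Sigma(F(x,u),u,a)$ and $u\mapsto\Sigma(F(x,0),u,a)$ are convex on $\mathbb{R}$ and continuously differentiable on $\mathbb{R}$ except possibly at finitely many points; let $U^d=U^d(x)$ be the set of such exceptional points. Let $\mathcal{G}=\{a_1,a_2\}\subset\mathcal{A}$ with $a_1\ne a_2$. (i) If for every $x,s$ there exists $\bar u\notin U^d$ such that $h^{x,s}_{a_1}(\bar u)=h^{x,s}_{a_2}(\bar u)$ and $h^{x,s}_i(\bar u)\ge h^{x,s}_a(\bar u)$ for all $i\in\mathcal{G}$, $a\notin\mathcal{G}$, and either $\frac{dh^{x,s}_{a_1}(\bar u)}{du}\cdot\frac{dh^{x,s}_{a_2}(\bar u)}{du}<0$ or $\frac{dh^{x,s}_{a_1}(\bar u)}{du}=\frac{dh^{x,s}_{a_2}(\bar u)}{du}=0$, then the game admits a non-pure saddle point $(u^*,p^* )$, $u^*\notin U^d$, with $p^*$ supported on $\mathcal{G}$. (ii) Conversely, if the game admits a non-pure saddle point $(u^*,p^* )$, $u^*\notin U^d$, with $p^*$ supported on $\mathcal{G}$, then there exists $\bar u\notin U^d$ such that $h^{x,s}_{a_1}(\bar u)=h^{x,s}_{a_2}(\bar u)$ and either $\frac{dh^{x,s}_{a_1}(\bar u)}{du}\cdot\frac{dh^{x,s}_{a_2}(\bar u)}{du}<0$ or $\frac{dh^{x,s}_{a_1}(\bar u)}{du}=\frac{dh^{x,s}_{a_2}(\bar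 u)}{du}=0$.
   Context: Setting (one-stage ANC game). Let $\mathcal{F}=\{1,\dots,|\mathcal{F}|\}$ be a finite set of transmission regimes and $\mathcal{A}=\{1,\dots,N\}$ a finite set of jammer actions. For each $a\in\mathcal{A}$ let $P(a)$ be an $|\mathcal{F}|\times|\mathcal{F}|$ row-stochastic matrix, and let $q\in[0,1]^{|\mathcal{F}|}$. Let $F:\mathbb{R}^n\times\mathbb{R}^m\to\mathbb{R}^n$, $\sigma^0:\mathbb{R}^n\times\mathbb{R}^m\to\mathbb{R}$, $\sigma^1:\mathbb{R}^n\to\mathbb{R}$, $g^0:\mathcal{A}\times\mathcal{F}\to\mathbb{R}$. For a plant state $x$ and regime $s$, the controller chooses $u\in\mathbb{R}^m$, the jammer chooses $p\in\mathcal{S}_{N-1}$ (unit simplex in $\mathbb{R}^N$); $a$ is drawn according to $p$, $s^+$ with $\mathrm{Pr}(s^+=i)=P_{si}(a)$, $b\in\{0,1\}$ with $\mathrm{Pr}(b=1\mid s^+)=q_{s^+}$, and $x^+=F(x,bu)$. Payoff $\Sigma(x^+,u,a)=\sigma^0(x,u)+\sigma^1(x^+)-g^0(a,s)$, with expectation $p'h^{x,s}(u)$ where $h^{x,s}_i(u)=(P(i)q)_s\Sigma(F(x,u),u,i)+(1-(P(i)q)_s)\Sigma(F(x,0),u,i)$, $(P(i)q)_s$ being the $s$-th entry of $P(i)q$. A saddle point is $(u^*,p^* )\in\mathbb{R}^m\times\mathcal{S}_{N-1}$ with $p'h^{x,s}(u^* )\le(p^* )'h^{x,s}(u^* )\le(p^*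 )'h^{x,s}(u)$ for all $u,p$. It is non-pure if $p^*$ has at least two positive components; ''$p^*$ supported on $\mathcal{G}$'' means $p^*_a=0$ for $a\notin\mathcal{G}$. *)

(* Defs.v *)
From HB Require Import structures.
From mathcomp Require Import all_boot all_order all_algebra.
From mathcomp Require Import all_classical all_reals all_analysis.
Set Implicit Arguments. Unset Strict Implicit. Unset Printing Implicit Defensive.
Import Order.TTheory GRing.Theory Num.Theory.
Import numFieldNormedType.Exports.
Local Open Scope classical_set_scope.
Local Open Scope ring_scope.

Section ANC.
Variables (R : realType) (n nF N : nat).
Variable F : 'rV[R]_n -> R -> 'rV[R]_n.
Variable sigma0 : 'rV[R]_n -> R -> R.
Variable sigma1 : 'rV[R]_n -> R.
(* g0 : A x F -> R ; actions 'I_N, regimes 'I_nF *)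
Variable g0 : 'I_N -> 'I_nF -> R.
Variable P : 'I_N -> 'M[R]_nF.
Variable q : 'cV[R]_nF.

Definition Sigma (x : 'rV[R]_n) (s : 'I_nF) (xp : 'rV[R]_n) (u : R) (a : 'I_N) : R :=
  sigma0 x u + sigma1 xp - g0 a s.

Definition Pq (s : 'I_nF) (i : 'I_N) : R := (P i *m q) s ord0.

Definition h (x : 'rV[R]_n) (s : 'I_nF) (i : 'I_N) (u : R) : R :=
  Pq s i * Sigma x s (F x u) u i + (1 - Pq s i) * Sigma x s (F x 0) u i.

Definition payoff (x : 'rV[R]_n) (s : 'I_nF) (p : 'I_N -> R) (u : R) : R :=
  \sum_(i < N) p i * h x s i u.

Definition in_simplex (p : 'I_N -> R) : Prop :=
  (forall i, 0 <= p i) /\ \sum_(i < N) p i = 1.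

Definition saddle_point (x : 'rV[R]_n) (s : 'I_nF) (u : R) (p : 'I_N -> R) : Prop :=
  in_simplex p /\
  (forall p', in_simplex p' -> payoff x s p' u <= payoff x s p u) /\
  (forall u', payoff x s p u <= payoff x s p u').

Definition non_pure (p : 'I_N -> R) : Prop :=
  exists i j : 'I_N, i != j /\ 0 < p i /\ 0 < p j.

Definition supported_on2 (p : 'I_N -> R) (a1 a2 : 'I_N) : Prop :=
  forall a, a != a1 -> a != a2 -> p a = 0.

Definition C1_at (f : R -> R) (u : R) : Prop :=
  (\forall v \near u, derivable f v 1) /\ {for u, continuous (derive1 f)}.

Definition Ud (x : 'rV[R]_n) : set R :=
  [set u | exists (s : 'I_nF) (a : 'I_N),
     ~ C1_at (fun v => Sigma x s (F x v) v a) u \/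
     ~ C1_at (fun v => Sigma x s (F x 0) v a) u].

End ANC.

Definition convex_on_R (R : realType) (f : R -> R) : Prop :=
  forall (y z t : R), 0 <= t -> t <= 1 ->
    f (t * y + (1 - t) * z) <= t * f y + (1 - t) * f z.

(* Main.v *)
Require Import Defs.
From HB Require Import structures.
From mathcomp Require Import all_boot all_order all_algebra.
From mathcomp Require Import all_classical all_reals all_analysis.
From mathcomp Require Import ring lra.
Import Order.TTheory GRing.Theory Num.Theory.
Import numFieldNormedType.Exports.
Local Open Scope classical_set_scope.
Local Open Scope ring_scope.

Lemma convex_min (R : realType) (g : R -> R) c :
  convex_on_R g -> derivable g c 1 -> 'D_1 g c = 0 -> forall y, g c <= g y.
Proof.
move=> cg dg D0 y; rewrite leNgt; apply/negP => gyc.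
have [ltcy|ltyc|eyc] := ltgtP c y; last by rewrite eyc ltxx in gyc.
- set k := (g y - g c) / (y - c).
  have k0 : k < 0 by rewrite /k pmulr_llt0 ?invr_gt0 ?subr_gt0 // subr_lt0.
  have : 'D_1 g c <= k.
    rewrite ['D_1 g c]cvg_at_rightE; last exact: dg.
    apply: limr_le.
      rewrite -(cvg_at_rightE (fun h : R => h^-1 *: ((g \o shift c) _ - g c))) //.
      apply: cvg_trans dg; apply: cvg_app.
      move=> A [e egt0 Ae]; exists e => // x xe xgt0; apply: Ae => //.
      exact/lt0r_neq0.
    near=> h.
    have h0 : 0 < h by near: h; exists 1 => /=.
    have hlt : h < y - c.
      near: h; exists (y - c); first by rewrite /= subr_gt0.
      by move=> h /=; rewrite distrC subr0 => /(le_lt_trans (ler_norm _)).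
    have := cg y c (h / (y - c)).
    have yc0 : 0 < y - c by rewrite subr_gt0.
    move=> /(_ (divr_ge0 (ltW h0) (ltW yc0))).
    rewrite ler_pdivrMr // mul1r ltW // => /(_ isT).
    have -> : h / (y - c) * y + (1 - h / (y - c)) * c = h + c.
      by field; rewrite lt0r_neq0.
    move=> H.
    rewrite /= [_%:A]mulr1 ler_pdivrMl // /k.
    have -> : h * ((g y - g c) / (y - c)) = h / (y - c) * g y + (1 - h / (y - c)) * g c - g c.
      by field; rewrite lt0r_neq0.
    by rewrite lerD2r.
  by rewrite D0 leNgt k0.
- set k := (g y - g c) / (y - c).
  have k0 : 0 < k by rewrite /k ltr_ndivlMr ?subr_lt0 // mul0r subr_lt0.
  have : k <= 'D_1 g c.
    rewrite ['D_1 g c]cvg_at_leftE; last exact: dg.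
    apply: limr_ge.
      rewrite -(cvg_at_leftE (fun h : R => h^-1 *: ((g \o shift c) _ - g c))) //.
      apply: cvg_trans dg; apply: cvg_app.
      move=> A [e egt0 Ae]; exists e => // x xe xgt0; apply: Ae => //.
      exact/ltr0_neq0.
    near=> h.
    have h0 : h < 0 by near: h; exists 1 => /=.
    have hlt : y - c < h.
      near: h; exists (c - y); first by rewrite /= subr_gt0.
      move=> h /=; rewrite distrC subr0 => /ltr_normlP [].
      by rewrite ltrNl opprB.
    have yc0 : y - c < 0 by rewrite subr_lt0.
    have := cg y c (h / (y - c)).
    have t0 : 0 <= h / (y - c) by rewrite ltW // ltr_ndivlMr // mul0r.
    move=> /(_ t0).
    rewrite ler_ndivrMr // mul1r ltW // => /(_ isT).
    have -> : h / (y - c) * y + (1 - h / (y - c)) * c = h + c.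
      by field; rewrite ltr0_neq0.
    move=> H.
    rewrite /= [_%:A]mulr1 ler_ndivlMl // /k.
    have -> : h * ((g y - g c) / (y - c)) = h / (y - c) * g y + (1 - h / (y - c)) * g c - g c.
      by field; rewrite ltr0_neq0.
    by rewrite lerD2r.
  by rewrite D0 leNgt k0.
Unshelve. all: by end_near.
Qed.

Lemma fermat_min (R : realType) (g : R -> R) c :
  derivable g c 1 -> (forall y, g c <= g y) -> 'D_1 g c = 0.
Proof.
move=> dg gmin; apply/eqP; rewrite eq_le; apply/andP; split.
  rewrite ['D_1 g c]cvg_at_leftE; last exact: dg.
  apply: limr_le.
    rewrite -(cvg_at_leftE (fun h : R => h^-1 *: ((g \o shift c) _ - g c))) //.
    apply: cvg_trans dg; apply: cvg_app.
    move=> A [e egt0 Ae]; exists e => // x xe xgt0; apply: Ae => //.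
    exact/ltr0_neq0.
  near=> h.
  have h0 : h < 0 by near: h; exists 1 => /=.
  apply: mulr_le0_ge0; first by rewrite invr_le0 ltW.
  by rewrite [_%:A]mulr1 subr_ge0 gmin.
rewrite ['D_1 g c]cvg_at_rightE; last exact: dg.
apply: limr_ge.
  rewrite -(cvg_at_rightE (fun h : R => h^-1 *: ((g \o shift c) _ - g c))) //.
  apply: cvg_trans dg; apply: cvg_app.
  move=> A [e egt0 Ae]; exists e => // x xe xgt0; apply: Ae => //.
  exact/lt0r_neq0.
near=> h.
have h0 : 0 < h by near: h; exists 1 => /=.
apply: mulr_ge0; first by rewrite invr_ge0 ltW.
by rewrite [_%:A]mulr1 subr_ge0 gmin.
Unshelve. all: by end_near.
Qed.

Lemma sum_supp2 (R : realType) N (p w : 'I_N -> R) (a1 a2 : 'I_N) :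
  a1 != a2 -> (forall a, a != a1 -> a != a2 -> p a = 0) ->
  \sum_(i < N) p i * w i = p a1 * w a1 + p a2 * w a2.
Proof.
move=> a12 supp.
rewrite (bigD1 a1) //= (bigD1 a2) 1?eq_sym //= big1 ?addr0 ?addrA //.
by move=> i /andP [ia1 ia2]; rewrite supp ?mul0r.
Qed.

Lemma weights (R : realType) (d1 d2 : R) :
  d1 * d2 < 0 \/ (d1 = 0 /\ d2 = 0) ->
  exists p1 p2, [/\ 0 < p1, 0 < p2, p1 + p2 = 1 & p1 * d1 + p2 * d2 = 0].
Proof.
case=> [neg|[-> ->]]; last first.
  by exists (1/2), (1/2); split; rewrite ?mulr0 ?addr0 //; lra.
have hne : d2 - d1 != 0.
  apply/eqP => e; have e' : d2 = d1 by lra.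
  by move: neg; rewrite e' -expr2 ltNge sqr_ge0.
have hpos : 0 < (d2 - d1) ^+ 2 by rewrite exprn_even_gt0.
exists ((d2 ^+ 2 - d1 * d2) / (d2 - d1) ^+ 2), ((d1 ^+ 2 - d1 * d2) / (d2 - d1) ^+ 2).
split.
- by apply: divr_gt0 => //; rewrite subr_gt0; apply: lt_le_trans neg (sqr_ge0 _).
- by apply: divr_gt0 => //; rewrite subr_gt0; apply: lt_le_trans neg (sqr_ge0 _).
- by field.
- by field.
Qed.

Lemma Pq_bounds (R : realType) nF N (P : 'I_N -> 'M[R]_nF) (q : 'cV[R]_nF)
  (HPnn : forall a i j, 0 <= P a i j)
  (HProw : forall a i, \sum_(j < nF) P a i j = 1)
  (Hq : forall i, 0 <= q i ord0 <= 1) s i :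
  0 <= Pq P q s i <= 1.
Proof.
rewrite /Pq mxE; apply/andP; split.
  by apply: sumr_ge0 => j _; apply: mulr_ge0 => //; case/andP: (Hq j).
rewrite -(HProw i s); apply: ler_sum => j _.
by case/andP: (Hq j) => q0 q1; apply: ler_piMr.
Qed.

Lemma conv_lin (R : realType) (f g : R -> R) a b : 0 <= a -> 0 <= b ->
  convex_on_R f -> convex_on_R g -> convex_on_R (fun u => a * f u + b * g u).
Proof.
move=> a0 b0 cf cg y z t t0 t1 /=.
apply: le_trans (lerD (ler_wpM2l a0 (cf y z t t0 t1)) (ler_wpM2l b0 (cg y z t t0 t1))) _.
by rewrite le_eqVlt; apply/orP; left; apply/eqP; ring.
Qed.

Lemma D_lin (R : realType) (f g : R -> R) a b u :
  derivable f u 1 -> derivable g u 1 ->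
  derivable (fun v => a * f v + b * g v) u 1 /\
  'D_1 (fun v => a * f v + b * g v) u = a * 'D_1 f u + b * 'D_1 g u.
Proof.
move=> df dg.
have -> : (fun v => a * f v + b * g v) = (a \*: f) + (b \*: g) by apply/funext.
split; first by apply: derivableD; apply: derivableZ.
by rewrite deriveD ?deriveZ //; apply: derivableZ.
Qed.
Arguments D_lin {R f g} a b {u}.
Arguments sum_supp2 {R N} p w {a1 a2}.
Arguments weights {R d1 d2}.
Arguments convex_min {R g c}.
Arguments fermat_min {R g c}.
Arguments Pq_bounds {R nF N P q}.

Theorem theorem3 (R : realType) (n nF N : nat)
  (F : 'rV[R]_n -> R -> 'rV[R]_n) (sigma0 : 'rV[R]_n -> R -> R)
  (sigma1 : 'rV[R]_n -> R) (g0 : 'I_N -> 'I_nF -> R)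
  (P : 'I_N -> 'M[R]_nF) (q : 'cV[R]_nF)
  (HPnn : forall a i j, 0 <= P a i j)
  (HProw : forall a i, \sum_(j < nF) P a i j = 1)
  (Hq : forall i, 0 <= q i ord0 <= 1)
  (Hconv1 : forall x s a,
     convex_on_R (fun u => Sigma sigma0 sigma1 g0 x s (F x u) u a))
  (Hconv0 : forall x s a,
     convex_on_R (fun u => Sigma sigma0 sigma1 g0 x s (F x 0) u a))
  (Hfin : forall x, finite_set (Ud F sigma0 sigma1 g0 x))
  (a1 a2 : 'I_N) (Ha12 : a1 != a2) :
  let hh := h F sigma0 sigma1 g0 P q in
  let U := Ud F sigma0 sigma1 g0 in
  ((forall x s, exists ub : R,
       ~ U x ub /\
       hh x s a1 ub = hh x s a2 ub /\
       (forall a, a != a1 -> a != a2 ->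
          hh x s a ub <= hh x s a1 ub /\ hh x s a ub <= hh x s a2 ub) /\
       (derive1 (hh x s a1) ub * derive1 (hh x s a2) ub < 0 \/
        (derive1 (hh x s a1) ub = 0 /\ derive1 (hh x s a2) ub = 0))) ->
   forall x s, exists (us : R) (p : 'I_N -> R),
       saddle_point F sigma0 sigma1 g0 P q x s us p /\ non_pure p /\
       ~ U x us /\ supported_on2 p a1 a2)
  /\
  (forall x s, (exists (us : R) (p : 'I_N -> R),
       saddle_point F sigma0 sigma1 g0 P q x s us p /\ non_pure p /\
       ~ U x us /\ supported_on2 p a1 a2) ->
   exists ub : R,
       ~ U x ub /\
       hh x s a1 ub = hh x s a2 ub /\
       (derive1 (hh x s a1) ub * derive1 (hh x s a2) ub < 0 \/
        (derive1 (hh x s a1) ub = 0 /\ derive1 (hh x s a2) ub = 0))).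
Proof.
move=> hh U.
have Hder : forall x s ub, ~ U x ub -> forall a, derivable (hh x s a) ub 1.
  move=> x s ub nU a.
  have dS : forall f : R -> R, C1_at f ub -> derivable f ub 1.
    by move=> f [Hn _]; exact: (nbhs_singleton Hn).
  have d1 : derivable (fun v => Sigma sigma0 sigma1 g0 x s (F x v) v a) ub 1.
    apply: dS; apply: contrapT => nd; apply: nU; exists s, a; by left.
  have d0 : derivable (fun v => Sigma sigma0 sigma1 g0 x s (F x 0) v a) ub 1.
    apply: dS; apply: contrapT => nd; apply: nU; exists s, a; by right.
  exact: (D_lin (Pq P q s a) (1 - Pq P q s a) d1 d0).1.
have Hconv : forall x s a, convex_on_R (hh x s a).
  move=> x s a; have /andP [q0 q1] := Pq_bounds HPnn HProw Hq s a.
  by apply: conv_lin; rewrite ?subr_ge0.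
split.
- move=> Hex x s.
  have [ub [nU [heq [hdom hd]]]] := Hex x s.
  rewrite !derive1E in hd.
  have [p1 [p2 [p10 p20 p12 pd]]] := weights hd.
  pose pf := fun i : 'I_N => if i == a1 then p1 else if i == a2 then p2 else 0.
  have supp : forall a, a != a1 -> a != a2 -> pf a = 0.
    by move=> a /negbTE Ha1 /negbTE Ha2; rewrite /pf Ha1 Ha2.
  have pa1 : pf a1 = p1 by rewrite /pf eqxx.
  have pa2 : pf a2 = p2 by rewrite /pf eq_sym (negbTE Ha12) eqxx.
  have pay : forall u, payoff F sigma0 sigma1 g0 P q x s pf u =
      p1 * hh x s a1 u + p2 * hh x s a2 u.
    by move=> u; rewrite /payoff (sum_supp2 _ _ Ha12 supp) pa1 pa2.
  exists ub, pf; split; last split; last split => //.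
    split; last split.
    + split.
        by move=> i; rewrite /pf; case: ifP => _; [exact: ltW|case: ifP => _ //; exact: ltW].
      transitivity (\sum_(i < N) pf i * 1); first by apply: eq_bigr => i _; rewrite mulr1.
      by rewrite (sum_supp2 _ _ Ha12 supp) pa1 pa2 !mulr1.
    + move=> p' [p'0 p'1]; rewrite pay /payoff.
      apply: (@le_trans _ _ (\sum_(i < N) p' i * hh x s a1 ub)).
        apply: ler_sum => i _; apply: ler_wpM2l => //.
        case: (eqVneq i a1) => [->|ia1] //.
        case: (eqVneq i a2) => [->|ia2]; first by rewrite heq.
        by case: (hdom i ia1 ia2).
      by rewrite -big_distrl /= p'1 mul1r -heq -mulrDl p12 mul1r.
    + move=> u'; rewrite !pay; apply: (convex_min (g := fun u => p1 * hh x s a1 u + p2 * hh x s a2 u)).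
      * by apply: conv_lin; rewrite ?ltW.
      * exact: (D_lin p1 p2 (Hder x s ub nU a1) (Hder x s ub nU a2)).1.
      * by rewrite (D_lin p1 p2 (Hder x s ub nU a1) (Hder x s ub nU a2)).2.
  by exists a1, a2; rewrite pa1 pa2.
- move=> x s [us [p [[[p0 p1s] [pmax pmin]] [[i [j [ij [pi pj]]]] [nU supp]]]]].
  have key : forall k, 0 < p k -> k = a1 \/ k = a2.
    move=> k pk; case: (eqVneq k a1) => [->|ka1]; first by left.
    case: (eqVneq k a2) => [->|ka2]; first by right.
    by rewrite supp // ltxx in pk.
  have [pa1 pa2] : 0 < p a1 /\ 0 < p a2.
    case: (key i pi) => Hi; case: (key j pj) => Hj; subst i j.
    + by rewrite eqxx in ij.
    + by [].
    + by [].
    + by rewrite eqxx in ij.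
  have pay : forall u, payoff F sigma0 sigma1 g0 P q x s p u =
      p a1 * hh x s a1 u + p a2 * hh x s a2 u.
    by move=> u; rewrite /payoff (sum_supp2 _ _ Ha12 supp).
  have psum : p a1 + p a2 = 1.
    rewrite -p1s; transitivity (\sum_(k < N) p k * 1); last by apply: eq_bigr => k _; rewrite mulr1.
    by rewrite (sum_supp2 _ _ Ha12 supp) !mulr1.
  have delta : forall b, b \in [:: a1; a2] ->
      hh x s b us <= p a1 * hh x s a1 us + p a2 * hh x s a2 us.
    move=> b bin; rewrite -pay.
    pose e := fun k : 'I_N => (k == b)%:R : R.
    have suppe : forall a, a != a1 -> a != a2 -> e a = 0.
      move=> a ha1 ha2; rewrite /e; case: eqP => // eab.
      by move: bin; rewrite !inE -eab (negbTE ha1) (negbTE ha2).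
    have ee : forall w, \sum_(k < N) e k * w k = w b.
      move=> w; rewrite (sum_supp2 _ _ Ha12 suppe) /e.
      move: bin; rewrite !inE => /orP [] /eqP ->.
        by rewrite eqxx eq_sym (negbTE Ha12) mul1r mul0r addr0.
      by rewrite eqxx (negbTE Ha12) mul1r mul0r add0r.
    have := pmax e; rewrite /payoff ee; apply; split.
      by move=> k; rewrite /e ler0n.
    transitivity (\sum_(k < N) e k * 1); first by apply: eq_bigr => k _; rewrite mulr1.
    exact: ee.
  have h1 := delta a1 (mem_head _ _).
  have h2 := delta a2 (@mem_behead _ [:: a1; a2] a2 (mem_head _ _)).
  have heq : hh x s a1 us = hh x s a2 us by nra.
  have [dg Dg] := D_lin (p a1) (p a2) (Hder x s us nU a1) (Hder x s us nU a2).
  have D0 : 'D_1 (fun v => p a1 * hh x s a1 v + p a2 * hh x s a2 v) us = 0.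
    by apply: fermat_min dg _ => y; rewrite -!pay; exact: pmin.
  exists us; split => //; split => //.
  rewrite !derive1E.
  set d1 := 'D_1 (hh x s a1) us; set d2 := 'D_1 (hh x s a2) us.
  have E : p a1 * d1 + p a2 * d2 = 0 by rewrite -Dg -D0.
  case: (eqVneq d1 0) => [d10|d1n0].
    right; split => //; move: E; rewrite d10 mulr0 add0r => /eqP.
    by rewrite mulf_eq0 (gt_eqF pa2) => /eqP.
  left; have : 0 < d1 ^+ 2 by rewrite exprn_even_gt0.
  nra.
Qed.
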